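(* Let $G_a=(V,E_a)$ with $E_a\subseteq E$ a set of directed links without self-loops, let $D_a^+$ be its maximum out-degree, and let $\Delta\ge1$ be an integer. For an integer $B\ge1$ and directed graphs $G^{(t)}=(V,E^{(t)})$, $t=0,\dots,B-1$, with $\bigcup_{t=0}^{B-1}E^{(t)}=E_a$, define $$F(B):=\Big(\sum_{t=0}^{B-1}\tau(G^{(t)})\Big)\Delta^2B\left(\Big\lceil\frac{D_a^+}{B}\Big\rceil+1\right)^{4\Delta B}.$$ Then $$F(B)\ge F(1)=\tau(G_a)\,\Delta^2(1+D_a^+)^{4\Delta}.$$
   Context: $G=(V,E)$ is a bidirected directed base topology on $V=\{1,\dots,n\}$. Communication model: two distinct directed links $(i,j),(k,l)$ (with $i\ne j$, $k\ne l$) can be scheduled in the same transmission slot iff (a) $i\ne l$ and $j\ne k$ (half-duplex), and (b) if $i\ne k$ then $(i,l)\notin E$ and $(k,j)\notin E$ (interference); otherwise they conflict. For a set $E'$ of activated links, its conflict graph is the undirected graph with vertex set $E'$ and an edge between every conflicting pair. For $H=(V,E')$, $\tau(H)$ denotes the chromatic number of the conflict graph of $E'$ (the minimum number of collision-free transmission slots needed to schedule all links of $E'$; $\tau=0$ if $E'=\emptyset$). The maximum out-degree $D_a^+$ is $\max_j|\{i:(j,i)\in E_a\}|$. *)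

(* Defs.v *)
From mathcomp Require Import all_boot all_order.
Set Implicit Arguments. Unset Strict Implicit. Unset Printing Implicit Defensive.

(* Vertices V = {1..n} are represented by 'I_n; a directed link (i,j) is a pair. *)
Notation link n := ((ordinal n) * (ordinal n))%type.

(* Compatibility of two links (i,j), (k,l) w.r.t. base topology E:
   (a) half-duplex: i <> l and j <> k;
   (b) interference: if i <> k then (i,l) \notin E and (k,j) \notin E. *)
Definition compatible n (E : rel 'I_n) (e1 e2 : link n) : bool :=
  let: (i, j) := e1 in let: (k, l) := e2 in
  [&& i != l, j != k & (i != k) ==> (~~ E i l && ~~ E k j)].

Definition conflict n (E : rel 'I_n) (e1 e2 : link n) : bool :=
  (e1 != e2) && ~~ compatible E e1 e2.

Definition colorable n (E : rel 'I_n) (E' : {set link n}) (k : nat) : bool :=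
  [exists f : {ffun link n -> 'I_k.+1},
     [forall e in E', f e < k] &&
     [forall e1 in E', forall e2 in E', conflict E e1 e2 ==> (f e1 != f e2)]].

Lemma colorable_exists n (E : rel 'I_n) (E' : {set link n}) :
  exists k, colorable E E' k.
Proof.
exists #|{: link n}|; apply/existsP.
exists [ffun e => widen_ord (leqnSn _) (enum_rank e)]; apply/andP; split.
  by apply/forallP => e; apply/implyP => _; rewrite ffunE /=.
apply/forallP => e1; apply/implyP => _; apply/forallP => e2; apply/implyP => _.
apply/implyP => /andP [ne _]; rewrite !ffunE.
apply: contra ne => /eqP H; apply/eqP; apply: enum_rank_inj.
by apply: val_inj; move: H => /(congr1 val).
Qed.

(* tau(H): chromatic number of the conflict graph of E' (0 if E' is empty). *)
Definition tau n (E : rel 'I_n) (E' : {set link n}) : nat :=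
  ex_minn (colorable_exists E E').

Definition max_outdeg n (Ea : {set link n}) : nat :=
  \max_(j : 'I_n) #|[set i : 'I_n | (j, i) \in Ea]|.

Definition ceildiv (a b : nat) : nat := (a + b.-1) %/ b.

(* Main.v *)
Require Import Defs.
From mathcomp Require Import all_boot all_order.
From mathcomp Require Import zify.

Lemma colU n (E : rel 'I_n) (A C : {set link n}) a c :
  colorable E A a -> colorable E C c -> colorable E (A :|: C) (a + c).
Proof.
case/existsP=> f /andP[/forallP fA /forallP fP].
case/existsP=> g /andP[/forallP gC /forallP gP].
pose hv := fun e => if e \in A then nat_of_ord (f e) else a + nat_of_ord (g e).
have hvle e : hv e < (a + c).+1.
  rewrite /hv; case: ifP => _; [ have := ltn_ord (f e) | have := ltn_ord (g e)]; lia.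
apply/existsP; exists [ffun e => inord (hv e) : 'I_(a+c).+1].
apply/andP; split.
- apply/forallP=> e; apply/implyP; rewrite inE => /orP[eA|eC];
    rewrite ffunE inordK ?hvle // /hv.
  + rewrite eA; have Hf : (nat_of_ord (f e) < a)%N := implyP (fA e) eA; lia.
  + case: ifP => eA; first by have Hf : (nat_of_ord (f e) < a)%N := implyP (fA e) eA; lia.
    have Hg : (nat_of_ord (g e) < c)%N := implyP (gC e) eC; lia.
- apply/forallP=> e1; apply/implyP; rewrite inE => H1.
  apply/forallP=> e2; apply/implyP; rewrite inE => H2; apply/implyP=> cf.
  rewrite !ffunE; apply/negP => /eqP /(congr1 (@nat_of_ord _)); rewrite !inordK ?hvle //.
  rewrite /hv; case: ifP=> e1A; case: ifP => e2A.
  + have ne := implyP (implyP (forallP (implyP (fP e1) e1A) e2) e2A) cf.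
    move=> Heq; move/negP: ne; apply; apply/eqP; exact: val_inj Heq.
  + have Hf : (nat_of_ord (f e1) < a)%N := implyP (fA e1) e1A; lia.
  + have Hf : (nat_of_ord (f e2) < a)%N := implyP (fA e2) e2A; lia.
  + have e1C : e1 \in C by move: H1; rewrite e1A.
    have e2C : e2 \in C by move: H2; rewrite e2A.
    have ne := implyP (implyP (forallP (implyP (gP e1) e1C) e2) e2C) cf.
    move/addnI=> Heq; move/negP: ne; apply; apply/eqP; exact: val_inj Heq.
Qed.

Lemma col_tau n (E : rel 'I_n) X : colorable E X (tau E X).
Proof. by rewrite /tau; case: ex_minnP. Qed.

Lemma tau_min n (E : rel 'I_n) X k : colorable E X k -> tau E X <= k.
Proof. by rewrite /tau; case: ex_minnP => m _ H /H. Qed.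

Lemma col_big n (E : rel 'I_n) m (Et : 'I_m -> {set link n}) :
  colorable E (\bigcup_(t < m) Et t) (\sum_(t < m) tau E (Et t)).
Proof.
elim: m Et => [|m IH] Et.
  rewrite big_ord0 big_ord0; apply/existsP; exists [ffun _ => ord0].
  apply/andP; split; apply/forallP => e; by rewrite inE.
rewrite big_ord_recr big_ord_recr /=; apply: colU; first exact: IH.
exact: col_tau.
Qed.

Lemma bern c B : 1 + c * B <= (c + 1) ^ B.
Proof.
elim: B => [|B IH]; first by rewrite expn0; lia.
rewrite expnS; nia.
Qed.

Theorem lemma3 (n : nat) (E : rel 'I_n)
  (Ebidir : forall i j, E i j = E j i)
  (Ea : {set link n})
  (EaE : forall i j, (i, j) \in Ea -> E i j)
  (Ea_noloop : forall i, (i, i) \notin Ea)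
  (Delta : nat) (HDelta : 1 <= Delta)
  (B : nat) (HB : 1 <= B) (Et : 'I_B -> {set link n})
  (Hunion : \bigcup_(t < B) Et t = Ea) :
  let D := max_outdeg Ea in
  (\sum_(t < B) tau E (Et t)) * Delta ^ 2 * B * (ceildiv D B + 1) ^ (4 * Delta * B)
  >= tau E Ea * Delta ^ 2 * (1 + D) ^ (4 * Delta).
Proof.
rewrite /=; set D := max_outdeg Ea.
have Ht : tau E Ea <= \sum_(t < B) tau E (Et t).
  by apply: tau_min; rewrite -Hunion; apply: col_big.
set c := ceildiv D B.
have HcB : D <= c * B.
  have := ltn_ceil (D + B.-1) HB; rewrite /c /ceildiv; lia.
have Hx : (1 + D) ^ (4 * Delta) <= (c + 1) ^ (4 * Delta * B).
  rewrite [4 * Delta * B]mulnC [(c + 1) ^ (B * _)]expnM leq_exp2r; last lia.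
  apply: leq_trans (bern c B); lia.
apply: (leq_trans (leq_mul (leq_mul Ht (leqnn (Delta ^ 2))) Hx)).
rewrite -(mulnA _ B); apply: leq_mul => //; exact: leq_pmull.
Qed.
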